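(* Let $\mathcal{H}$ be a two-sided quaternionic Hilbert space whose inner product $\langle\cdot,\cdot\rangle$ satisfies in addition $\langle u,\lambda v\rangle=\langle\bar\lambda u,v\rangle$ for all $u,v\in\mathcal{H}$, $\lambda\in\mathbb{H}$. Then for each $n\ge1$ the formula $$\langle u_1\otimes\cdots\otimes u_n,\ v_1\otimes\cdots\otimes v_n\rangle=\langle\langle\cdots\langle\langle\langle u_1,v_1\rangle u_2,v_2\rangle u_3,v_3\rangle\cdots\rangle u_n,v_n\rangle$$ (extended additively) defines a quaternionic inner product on $\mathcal{H}^{\otimes n}$, which moreover satisfies the same additional property $\langle x,\lambda y\rangle=\langle\bar\lambda x,y\rangle$ for $x,y\in\mathcal{H}^{\otimes n}$, $\lambda\in\mathbb{H}$.
   Context: $\mathbb{H}$ denotes the quaternions. A quaternionic inner product on a right (or two-sided) $\mathbb{H}$-vector space $V$ is a map $\langle\cdot,\cdot\rangle:V\times V\to\mathbb{H}$ which is additive in each argument, satisfies $\langle u\alpha,v\beta\rangle=\bar\beta\langle u,v\rangle\alpha$ for $\alpha,\beta\in\mathbb{H}$, $\langle v,u\rangle=\overline{\langle u,v\rangle}$, and $\langle u,u\rangle\ge0$ with equality only for $u=0$. A two-sided quaternionic Hilbert space is an $\mathbb{H}$-bimodule with such an inner product, complete for the induced norm. $\mathcal{H}^{\otimes n}=\mathcal{H}\otimes_{\mathbb{H}}\cdots\otimes_{\mathbb{H}}\mathcal{H}$ ($n$ factors) is the tensor product of $\mathbb{H}$-bimodules (so $u\lambda\otimes v=u\otimes\lambda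 v$), itself an $\mathbb{H}$-bimodule with $\lambda(u_1\otimes\cdots\otimes u_n)=(\lambda u_1)\otimes\cdots\otimes u_n$ and $(u_1\otimes\cdots\otimes u_n)\lambda=u_1\otimes\cdots\otimes(u_n\lambda)$. In the formula, $\langle u_1,v_1\rangle u_2$ denotes left multiplication of $u_2$ by the quaternion $\langle u_1,v_1\rangle$. *)

(* Defs.v *)
From HB Require Import structures.
From mathcomp Require Import all_boot all_order all_algebra.
From mathcomp Require Import reals.
From mathcomp Require Import ring.
Set Implicit Arguments. Unset Strict Implicit. Unset Printing Implicit Defensive.
Import Order.TTheory GRing.Theory Num.Theory.
Local Open Scope ring_scope.

Section Quat.
Variable R : realType.

Record quat := Quat { qre : R; qi : R; qj : R; qk : R }.

Definition quat_to (q : quat) := (qre q, qi q, qj q, qk q).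
Definition quat_of (x : R * R * R * R) := let: (a, b, c, d) := x in Quat a b c d.
Lemma quat_toK : cancel quat_to quat_of. Proof. by case. Qed.

HB.instance Definition _ := Equality.copy quat (can_type quat_toK).
HB.instance Definition _ := Choice.copy quat (can_type quat_toK).

Definition qzero := Quat 0 0 0 0.
Definition qone := Quat 1 0 0 0.
Definition qadd p q := Quat (qre p + qre q) (qi p + qi q) (qj p + qj q) (qk p + qk q).
Definition qopp p := Quat (- qre p) (- qi p) (- qj p) (- qk p).
(* Hamilton product: i^2 = j^2 = k^2 = ijk = -1 *)
Definition qmul p q := Quat
  (qre p * qre q - qi p * qi q - qj p * qj q - qk p * qk q)
  (qre p * qi q + qi p * qre q + qj p * qk q - qk p * qj q)
  (qre p * qj q - qi p * qk q + qj p * qre q + qk p * qi q)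
  (qre p * qk q + qi p * qj q - qj p * qi q + qk p * qre q).

Lemma quatP p q : qre p = qre q -> qi p = qi q -> qj p = qj q -> qk p = qk q -> p = q.
Proof. by case: p; case: q => /= ? ? ? ? ? ? ? ? -> -> -> ->. Qed.

Lemma qaddA : associative qadd.
Proof. by move=> ? ? ?; apply: quatP => /=; ring. Qed.
Lemma qaddC : commutative qadd.
Proof. by move=> ? ?; apply: quatP => /=; ring. Qed.
Lemma qadd0 : left_id qzero qadd.
Proof. by move=> ?; apply: quatP => /=; ring. Qed.
Lemma qaddN : left_inverse qzero qopp qadd.
Proof. by move=> ?; apply: quatP => /=; ring. Qed.

HB.instance Definition _ := GRing.isZmodule.Build quat qaddA qaddC qadd0 qaddN.

Lemma qmulA : associative qmul.
Proof. by move=> ? ? ?; apply: quatP => /=; ring. Qed.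
Lemma qmul1 : left_id qone qmul.
Proof. by move=> ?; apply: quatP => /=; ring. Qed.
Lemma qmulr1 : right_id qone qmul.
Proof. by move=> ?; apply: quatP => /=; ring. Qed.
Lemma qmulDl : left_distributive qmul qadd.
Proof. by move=> ? ? ?; apply: quatP => /=; ring. Qed.
Lemma qmulDr : right_distributive qmul qadd.
Proof. by move=> ? ? ?; apply: quatP => /=; ring. Qed.
Lemma qone_neq0 : qone != qzero.
Proof. by apply/eqP => -[] /eqP; rewrite oner_eq0. Qed.

HB.instance Definition _ :=
  GRing.Zmodule_isNzRing.Build quat qmulA qmul1 qmulr1 qmulDl qmulDr qone_neq0.

Definition qconj p := Quat (qre p) (- qi p) (- qj p) (- qk p).
Definition qnonneg (q : quat) := [/\ qi q = 0, qj q = 0, qk q = 0 & 0 <= qre q].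

End Quat.

Section Hilbert.
Variables (R : realType) (V : zmodType).
Variables (lact : quat R -> V -> V) (ract : V -> quat R -> V).

Definition qbimodule :=
  [/\ [/\ (forall a u v, lact a (u + v) = lact a u + lact a v),
      (forall a b u, lact (a + b) u = lact a u + lact b u),
      (forall a b u, lact (a * b) u = lact a (lact b u)) &
      (forall u, lact 1 u = u)],
     [/\ (forall a u v, ract (u + v) a = ract u a + ract v a),
      (forall a b u, ract u (a + b) = ract u a + ract u b),
      (forall a b u, ract u (a * b) = ract (ract u a) b) &
      (forall u, ract u 1 = u)] &
      (forall a b u, lact a (ract u b) = ract (lact a u) b)].

Definition qinner_product (ip : V -> V -> quat R) :=
  [/\ (forall u u' v, ip (u + u') v = ip u v + ip u' v),
      (forall u v v', ip u (v + v') = ip u v + ip u v'),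
      (forall u v a b, ip (ract u a) (ract v b) = qconj b * ip u v * a),
      (forall u v, ip v u = qconj (ip u v)) &
      (forall u, qnonneg (ip u u) /\ (ip u u = 0 -> u = 0))].

Definition qnorm (ip : V -> V -> quat R) (u : V) : R := Num.sqrt (qre (ip u u)).

Definition qcomplete (ip : V -> V -> quat R) :=
  forall s : nat -> V,
    (forall e : R, 0 < e -> exists N, forall m k, (N <= m)%N -> (N <= k)%N ->
         qnorm ip (s m - s k) < e) ->
    exists l : V, forall e : R, 0 < e -> exists N, forall m, (N <= m)%N ->
         qnorm ip (s m - l) < e.

Definition two_sided_qhilbert (ip : V -> V -> quat R) :=
  [/\ qbimodule, qinner_product ip & qcomplete ip].

(* The algebraic tensor power H (x)_H ... (x)_H H  (n factors).         *)
(* An element is represented by a formal Z-linear combination           *)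
(* sum_k c_k [t_k] of n-tuples t_k : 'I_n -> V; two representatives     *)
(* denote the same tensor iff their difference lies in the subgroup     *)
(* generated by the multi-additivity and balancing relators.            *)
Variable n : nat.
Definition ntuple := {ffun 'I_n -> V}.
Definition formal := seq (int * ntuple).

Definition upd (t : ntuple) (i : 'I_n) (x : V) : ntuple :=
  [ffun j => if j == i then x else t j].

Definition coef (s : formal) (t : ntuple) : int :=
  \sum_(p <- s | p.2 == t) p.1.

Definition fscale (c : int) (s : formal) : formal := [seq (c * p.1, p.2) | p <- s].
Definition fneg (s : formal) : formal := fscale (-1) s.

Definition is_relator (r : formal) : Prop :=
  (exists (t : ntuple) (i : 'I_n) (x y : V),
      r = [:: (1, upd t i (x + y)); (-1, upd t i x); (-1, upd t i y)]) \/
  (exists (t : ntuple) (i j : 'I_n) (x y : V) (a : quat R),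
      val j = (val i).+1 /\
      r = [:: (1, upd (upd t i (ract x a)) j y); (-1, upd (upd t i x) j (lact a y))]).

Definition tnull (s : formal) : Prop :=
  exists rs : seq (int * formal),
    (forall r, r \in rs -> is_relator r.2) /\
    forall t, coef s t = \sum_(r <- rs) r.1 * coef r.2 t.

Definition tequiv (x y : formal) : Prop := tnull (x ++ fneg y).
Definition tadd (x y : formal) : formal := x ++ y.

Definition tlact (a : quat R) (x : formal) : formal :=
  [seq (p.1, [ffun j : 'I_n => if val j == 0%N then lact a (p.2 j) else p.2 j]) | p : int * ntuple <- x].
Definition tract (x : formal) (a : quat R) : formal :=
  [seq (p.1, [ffun j : 'I_n => if val j == n.-1 then ract (p.2 j) a else p.2 j]) | p : int * ntuple <- x].

(* <<...<<<u1,v1>u2,v2>u3,v3>...>un,vn> on lists of factors *)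
Fixpoint nested_ip_acc (ip : V -> V -> quat R) (acc : quat R) (us vs : seq V) : quat R :=
  match us, vs with
  | u :: us', v :: vs' => nested_ip_acc ip (ip (lact acc u) v) us' vs'
  | _, _ => acc
  end.
Definition nested_ip (ip : V -> V -> quat R) (us vs : seq V) : quat R :=
  match us, vs with
  | u :: us', v :: vs' => nested_ip_acc ip (ip u v) us' vs'
  | _, _ => 0
  end.

Definition elem_ip (ip : V -> V -> quat R) (t t' : ntuple) : quat R :=
  nested_ip ip [seq t i | i <- enum 'I_n] [seq t' i | i <- enum 'I_n].

Definition tensor_ip (ip : V -> V -> quat R) (x y : formal) : quat R :=
  \sum_(p <- x) \sum_(q <- y) (p.1 * q.1)%:~R * elem_ip ip p.2 q.2.

End Hilbert.

(* Main.v *)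
Require Import Defs.
From mathcomp Require Import all_boot all_order all_algebra reals ring zify.
Set Implicit Arguments. Unset Strict Implicit. Unset Printing Implicit Defensive.
Import Order.TTheory GRing.Theory Num.Theory.
Local Open Scope ring_scope.

Section QuatFacts.
Variable R : realType.
Implicit Types p q : quat R.

Lemma qreM p q : qre (p * q) = qre p * qre q - qi p * qi q - qj p * qj q - qk p * qk q.
Proof. by []. Qed.

Lemma qconjM p q : qconj (p * q) = qconj q * qconj p.
Proof. by apply: quatP => /=; ring. Qed.
Lemma qconjD p q : qconj (p + q) = qconj p + qconj q.
Proof. by apply: quatP => /=; ring. Qed.
Lemma qconjK p : qconj (qconj p) = p.
Proof. by apply: quatP => /=; ring. Qed.
Lemma qconj1 : qconj (1 : quat R) = 1.
Proof. by apply: quatP => /=; ring. Qed.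
Lemma qconj0 : qconj (0 : quat R) = 0.
Proof. by apply: quatP => /=; ring. Qed.

Lemma addz_hom (U W : zmodType) (f : U -> W) :
  (forall a b, f (a + b) = f a + f b) -> forall a z, f (a *~ z) = f a *~ z.
Proof.
move=> fD.
have f0 : f 0 = 0.
  by have := fD 0 0; rewrite addr0 => /(congr1 (fun x => x - f 0)); rewrite addrK subrr.
have fN a : f (- a) = - f a.
  by apply/eqP; rewrite -subr_eq0 opprK -fD addNr f0.
have fn a k : f (a *+ k) = f a *+ k.
  by elim: k => [|k IH]; rewrite ?mulr0n ?f0 // !mulrS fD IH.
move=> a [] k; first by rewrite -!pmulrn fn.
by rewrite NegzE !mulrNz fN -!pmulrn fn.
Qed.

Lemma qconjz p z : qconj (p *~ z) = qconj p *~ z.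
Proof. exact: (addz_hom qconjD). Qed.

Lemma qconj_int (z : int) : qconj (z%:~R : quat R) = z%:~R.
Proof. by rewrite qconjz qconj1. Qed.

Definition qr (r : R) : quat R := Quat r 0 0 0.

Lemma qrM (a b : R) : qr a * qr b = qr (a * b).
Proof. by apply: quatP => /=; ring. Qed.
Lemma qconj_qr a : qconj (qr a) = qr a.
Proof. by apply: quatP => /=; ring. Qed.
Lemma qr1 : qr 1 = 1. Proof. by []. Qed.
Lemma qr0 : qr 0 = 0. Proof. by []. Qed.

Lemma qnonneg_qr p : qnonneg p -> p = qr (qre p).
Proof. by case: p => a b c d [/= -> -> -> _]. Qed.

Lemma qnonneg0 : qnonneg (0 : quat R).
Proof. by split. Qed.

Lemma qnonnegD p q : qnonneg p -> qnonneg q -> qnonneg (p + q).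
Proof.
case=> p1 p2 p3 p4 [] q1 q2 q3 q4; split => /=;
  rewrite ?p1 ?p2 ?p3 ?q1 ?q2 ?q3 ?addr0 //; exact: addr_ge0.
Qed.

Lemma qnonneg_sum (I : Type) (s : seq I) (F : I -> quat R) :
  (forall i, qnonneg (F i)) -> qnonneg (\sum_(i <- s) F i).
Proof.
move=> H; elim: s => [|a s IH]; first by rewrite big_nil; exact: qnonneg0.
by rewrite big_cons; apply: qnonnegD.
Qed.

Lemma qnonnegD_eq0 p q : qnonneg p -> qnonneg q -> p + q = 0 -> p = 0.
Proof.
case=> p1 p2 p3 p4 [] q1 q2 q3 q4 /(congr1 (@qre R)) /= E.
have : (qre p == 0) && (qre q == 0) by rewrite -(paddr_eq0 p4 q4) E.
by case/andP => /eqP E0 _; apply: quatP.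
Qed.

Lemma qnonneg_sum_eq0 (I : eqType) (s : seq I) (F : I -> quat R) :
  (forall i, qnonneg (F i)) -> \sum_(i <- s) F i = 0 -> forall i, i \in s -> F i = 0.
Proof.
move=> H; elim: s => [|a s IH] //= E i.
rewrite big_cons in E.
have Fa : F a = 0 by apply: qnonnegD_eq0 E => //; exact: qnonneg_sum.
rewrite in_cons => /orP [/eqP -> //|].
by apply: IH; rewrite Fa add0r in E.
Qed.

Lemma qconj_sum (I : Type) (s : seq I) (F : I -> quat R) :
  qconj (\sum_(i <- s) F i) = \sum_(i <- s) qconj (F i).
Proof.
elim: s => [|a s IH]; first by rewrite !big_nil qconj0.
by rewrite !big_cons qconjD IH.
Qed.

End QuatFacts.

Section Hilb.
Variables (R : realType) (V : zmodType).
Variables (lact : quat R -> V -> V) (ract : V -> quat R -> V) (ip : V -> V -> quat R).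
Hypothesis lactDr : forall a u v, lact a (u + v) = lact a u + lact a v.
Hypothesis lactDl : forall a b u, lact (a + b) u = lact a u + lact b u.
Hypothesis lactM : forall a b u, lact (a * b) u = lact a (lact b u).
Hypothesis lact1 : forall u, lact 1 u = u.
Hypothesis ractDl : forall a u v, ract (u + v) a = ract u a + ract v a.
Hypothesis ractDr : forall a b u, ract u (a + b) = ract u a + ract u b.
Hypothesis ractM : forall a b u, ract u (a * b) = ract (ract u a) b.
Hypothesis ract1 : forall u, ract u 1 = u.
Hypothesis lractC : forall a b u, lact a (ract u b) = ract (lact a u) b.
Hypothesis ipDl : forall u u' v, ip (u + u') v = ip u v + ip u' v.
Hypothesis ipDr : forall u v v', ip u (v + v') = ip u v + ip u v'.
Hypothesis ipS : forall u v a b, ip (ract u a) (ract v b) = qconj b * ip u v * a.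
Hypothesis ipC : forall u v, ip v u = qconj (ip u v).
Hypothesis ipP : forall u, qnonneg (ip u u) /\ (ip u u = 0 -> u = 0).
Hypothesis ipL : forall (u v : V) (l : quat R), ip u (lact l v) = ip (lact (qconj l) u) v.

Lemma lactz z u : lact (z%:~R) u = u *~ z.
Proof. by have := addz_hom (f := fun a => lact a u) (fun a b => lactDl a b u) 1 z; rewrite lact1. Qed.
Lemma lact0 u : lact 0 u = 0.
Proof. by have := lactz 0 u; rewrite mulr0z. Qed.
Lemma lact0r a : lact a 0 = 0.
Proof. by have := addz_hom (lactDr a) 0 0; rewrite !mulr0z. Qed.
Lemma ract0 u : ract u 0 = 0.
Proof. by have := addz_hom (f := fun a => ract u a) (fun a b => ractDr a b u) 1 0; rewrite !mulr0z. Qed.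
Lemma ip0l v : ip 0 v = 0.
Proof. by have := addz_hom (f := fun a => ip a v) (fun a b => ipDl a b v) 0 0; rewrite !mulr0z. Qed.
Lemma ip0r u : ip u 0 = 0.
Proof. by have := addz_hom (ipDr u) 0 0; rewrite !mulr0z. Qed.
Lemma ipzl u v z : ip (u *~ z) v = ip u v *~ z.
Proof. exact: (addz_hom (f := fun a => ip a v) (fun a b => ipDl a b v)). Qed.
Lemma ipzr u v z : ip u (v *~ z) = ip u v *~ z.
Proof. exact: (addz_hom (ipDr u)). Qed.
Lemma ipsuml (I : Type) (s : seq I) (F : I -> V) v :
  ip (\sum_(i <- s) F i) v = \sum_(i <- s) ip (F i) v.
Proof. elim: s => [|a s IH]; by rewrite ?big_nil ?ip0l // !big_cons ipDl IH. Qed.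
Lemma ipsumr (I : Type) (s : seq I) (F : I -> V) u :
  ip u (\sum_(i <- s) F i) = \sum_(i <- s) ip u (F i).
Proof. elim: s => [|a s IH]; by rewrite ?big_nil ?ip0r // !big_cons ipDr IH. Qed.
Lemma iprl u v a : ip (ract u a) v = ip u v * a.
Proof. by have := ipS u v a 1; rewrite !ract1 qconj1 mul1r. Qed.
Lemma iprr u v b : ip u (ract v b) = qconj b * ip u v.
Proof. by have := ipS u v 1 b; rewrite !ract1 mulr1. Qed.

Notation N := (nested_ip_acc lact ip).

Lemma N_nil_r acc us : N acc us [::] = acc.
Proof. by case: us. Qed.

Lemma ND a b us vs : N (a + b) us vs = N a us vs + N b us vs.
Proof.
elim: us a b vs => [|u us IH] a b [|v vs] //=.
by rewrite lactDl ipDl IH.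
Qed.

Lemma Nz a z us vs : N (a *~ z) us vs = N a us vs *~ z.
Proof. exact: (addz_hom (f := fun a => N a us vs) (fun a b => ND a b us vs)). Qed.

Lemma N0 us vs : N 0 us vs = 0.
Proof. by have := Nz 0 0 us vs; rewrite !mulr0z. Qed.

Lemma Nsum (I : Type) (s : seq I) (F : I -> quat R) us vs :
  N (\sum_(i <- s) F i) us vs = \sum_(i <- s) N (F i) us vs.
Proof. elim: s => [|a s IH]; by rewrite ?big_nil ?N0 // !big_cons ND IH. Qed.

Lemma Ncat acc p us vs : N acc (p ++ us) vs = N (N acc p vs) us (drop (size p) vs).
Proof.
elim: p acc vs => [|x p IH] acc vs; first by rewrite drop0.
case: vs => [|v vs] /=; first by rewrite N_nil_r.
exact: IH.
Qed.

Lemma Ncatr acc us vs ws : (size us <= size vs)%N -> N acc us (vs ++ ws) = N acc us vs.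
Proof.
elim: us acc vs => [|u us IH] acc [|v vs] //= H.
exact: IH.
Qed.

Lemma Nconj acc us vs : N (qconj acc) vs us = qconj (N acc us vs).
Proof.
elim: us acc vs => [|u us IH] acc [|v vs] //=.
by rewrite [ip _ u]ipC ipL qconjK IH.
Qed.


Lemma ipNl u v : ip (- u) v = - ip u v.
Proof. by have := ipzl u v (-1); rewrite !mulrN1z. Qed.
Lemma ipBl u u' v : ip (u - u') v = ip u v - ip u' v.
Proof. by rewrite ipDl ipNl. Qed.

Lemma sum_delta (K : nat) (i : 'I_K) (F : 'I_K -> quat R) :
  \sum_(j < K) (j == i)%:R * F j = F i.
Proof.
rewrite (bigD1 i) //= eqxx mul1r big1 ?addr0 // => j /negbTE ->.
by rewrite mul0r.
Qed.

Lemma GS (U : seq V) : exists E : seq V,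
  (forall i j, (i < size E)%N -> (j < size E)%N ->
      ip (nth 0 E i) (nth 0 E j) = (i == j)%:R) /\
  (forall u, u \in U -> u = \sum_(i < size E) ract (nth 0 E i) (ip u (nth 0 E i))).
Proof.
elim: U => [|u U [E [orth exp]]].
  by exists [::]; split.
set w := u - \sum_(i < size E) ract (nth 0 E i) (ip u (nth 0 E i)).
have wE i : (i < size E)%N -> ip w (nth 0 E i) = 0.
  move=> Hi; rewrite ipBl ipsuml.
  under eq_bigr => j _ do rewrite iprl orth //.
  have -> : \sum_(j < size E) ((j : nat) == i)%:R * ip u (nth 0 E j)
      = \sum_(j < size E) (j == Ordinal Hi)%:R * ip u (nth 0 E j) by [].
  by rewrite sum_delta subrr.
have Ew i : (i < size E)%N -> ip (nth 0 E i) w = 0.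
  by move=> Hi; rewrite ipC wE // qconj0.
have spanE x : x = \sum_(i < size E) ract (nth 0 E i) (ip x (nth 0 E i)) -> ip x w = 0.
  move=> ->; rewrite ipsuml big1 // => i _; by rewrite iprl Ew // mul0r.
case: (ipP w) => [wnn wdef].
case: (boolP (w == 0)) => [/eqP w0 | wn0].
  exists E; split => // x; rewrite in_cons => /orP [/eqP -> | /exp //].
  by move: w0; rewrite /w => /eqP; rewrite subr_eq0 => /eqP.
set Nw := qre (ip w w).
have ww : ip w w = qr Nw by apply: qnonneg_qr.
have Npos : 0 < Nw.
  rewrite lt0r; case: wnn => _ _ _ ->; rewrite andbT.
  apply/eqP => N0; move: wn0; rewrite (wdef _) ?eqxx //.
  by rewrite ww N0.
have sq0 : Num.sqrt Nw != 0 by rewrite sqrtr_eq0 -ltNge.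
have hs : Num.sqrt Nw ^+ 2 = Nw by rewrite sqr_sqrtr // ltW.
set s := (Num.sqrt Nw)^-1.
have Nw0 : Nw != 0 by rewrite gt_eqF.
have ss : s * (s * Nw) = 1 by rewrite /s mulrA -expr2 exprVn hs mulVf.
set e := ract w (qr s).
have ee : ip e e = 1.
  have ss' : s * Nw * s = 1 by rewrite -ss mulrC mulrA.
  by rewrite /e ipS ww qconj_qr !qrM ss'.
exists (rcons E e); split.
  move=> i j; rewrite size_rcons !ltnS !nth_rcons => Hi Hj.
  have [Hi'|Hi'] := ltnP i (size E); have [Hj'|Hj'] := ltnP j (size E).
  - exact: orth.
  - have Ej : j = size E by apply/eqP; rewrite eqn_leq Hj Hj'.
    by rewrite Ej ?ltnn eqxx (ltn_eqF Hi') /e iprr Ew // mulr0.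
  - have Ei : i = size E by apply/eqP; rewrite eqn_leq Hi Hi'.
    by rewrite Ei ?ltnn eqxx (gtn_eqF Hj') /e iprl wE // mul0r.
  - have Ej : j = size E by apply/eqP; rewrite eqn_leq Hj Hj'.
    have Ei : i = size E by apply/eqP; rewrite eqn_leq Hi Hi'.
    by rewrite Ei Ej ?ltnn eqxx ee.
move=> x; rewrite size_rcons big_ord_recr /= nth_rcons ltnn eqxx.
have nthw (i : 'I_(size E)) : nth 0 (rcons E e) (widen_ord (leqnSn (size E)) i) = nth 0 E i.
  by rewrite /= nth_rcons ltn_ord.
under eq_bigr => i _ do rewrite nthw.
rewrite in_cons => /orP [/eqP -> | /exp Hx].
  have -> : ip u e = qr s * qr Nw.
    rewrite /e iprr qconj_qr; congr (_ * _).
    rewrite -{1}(subrK (\sum_(i < size E) ract (nth 0 E i) (ip u (nth 0 E i))) u) -/w.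
    rewrite ipDl ww ipsuml big1 ?addr0 // => i _.
    by rewrite iprl Ew // mul0r.
  rewrite /e -ractM !qrM ss qr1 ract1.
  by rewrite /w addrC subrK.
have -> : ip x e = 0 by rewrite /e iprr (spanE x Hx) mulr0.
by rewrite ract0 addr0 -Hx.
Qed.

Definition Sf (fam : seq (seq V)) : quat R := \sum_(w <- fam) \sum_(w' <- fam) N 1 w w'.
Definition lfirst (a : quat R) (w : seq V) : seq V := if w is z :: r then lact a z :: r else w.

Lemma size_lfirst a w : size (lfirst a w) = size w.
Proof. by case: w. Qed.

Lemma N_lfirst a b y y' : (0 < size y)%N -> (0 < size y')%N ->
  N (qconj b * a) y y' = N 1 (lfirst a y) (lfirst b y').
Proof. by case: y => [|z r]; case: y' => [|z' r'] //= _ _; rewrite lact1 ipL lactM. Qed.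

Lemma headE (w : seq V) k : size w = k.+1 -> w = head 0 w :: behead w.
Proof. by case: w. Qed.

Lemma ip_expand (E : seq V) u u' :
  u = \sum_(i < size E) ract (nth 0 E i) (ip u (nth 0 E i)) ->
  ip u u' = \sum_(i < size E) qconj (ip u' (nth 0 E i)) * ip u (nth 0 E i).
Proof.
move=> Hu; rewrite {1}Hu ipsuml; apply: eq_bigr => i _.
by rewrite iprl ipC.
Qed.

Lemma Sf_step m (fam : seq (seq V)) (E : seq V) :
  all (fun w => size w == m.+2) fam ->
  (forall u, u \in map (head 0) fam ->
     u = \sum_(i < size E) ract (nth 0 E i) (ip u (nth 0 E i))) ->
  Sf fam = \sum_(i < size E)
      Sf [seq lfirst (ip (head 0 w) (nth 0 E i)) (behead w) | w <- fam].
Proof.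
move=> /allP Hs HE.
rewrite /Sf.
under [RHS]eq_bigr => i _ do rewrite big_map; under [RHS]eq_bigr => i _ do
  under eq_bigr => w _ do rewrite big_map.
rewrite [RHS]exchange_big /=; apply: eq_big_seq => w Hw.
rewrite [RHS]exchange_big /=; apply: eq_big_seq => w' Hw'.
have sw := eqP (Hs w Hw); have sw' := eqP (Hs w' Hw').
rewrite (headE sw) (headE sw') /= lact1.
rewrite (ip_expand _ (HE _ (map_f _ Hw))) Nsum.
apply: eq_bigr => i _; apply: N_lfirst.
  by move: sw; case: w {Hw} => //= ? ? [] ->.
by move: sw'; case: w' {Hw'} => //= ? ? [] ->.
Qed.

Lemma Sf_base (fam : seq (seq V)) :
  all (fun w => size w == 1%N) fam ->
  Sf fam = ip (\sum_(w <- fam) head 0 w) (\sum_(w <- fam) head 0 w).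
Proof.
move=> /allP Hs; rewrite /Sf ipsuml; apply: eq_big_seq => w Hw.
rewrite ipsumr; apply: eq_big_seq => w' Hw'.
move: (eqP (Hs w Hw)) (eqP (Hs w' Hw')).
case: w {Hw} => [|a [|? ?]] //; case: w' {Hw'} => [|a' [|? ?]] //= _ _.
by rewrite lact1.
Qed.

Lemma Sf_nonneg m (fam : seq (seq V)) :
  all (fun w => size w == m.+1) fam -> qnonneg (Sf fam).
Proof.
elim: m fam => [|m IH] fam Hs.
  by rewrite Sf_base //; case: (ipP (\sum_(w <- fam) head 0 w)).
have [E [_ HE]] := GS (map (head 0) fam).
rewrite (Sf_step Hs HE); apply: qnonneg_sum => i; apply: IH.
apply/allP => w' /mapP [w Hw ->]; rewrite size_lfirst size_behead.
by rewrite (eqP (allP Hs w Hw)).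
Qed.

Variable n' : nat.
Local Notation n := n'.+1.
Local Notation tp := (ntuple V n).
Local Notation fm := (formal V n).

Definition tup (s : seq V) : tp := [ffun i : 'I_n => nth 0 s i].
Definition Lt (t : tp) : seq V := [seq t i | i <- enum 'I_n].

Lemma size_Lt t : size (Lt t) = n.
Proof. by rewrite size_map size_enum_ord. Qed.

Lemma nth_Lt t (i : 'I_n) : nth 0 (Lt t) i = t i.
Proof. by rewrite (nth_map i) ?size_enum_ord // nth_ord_enum. Qed.

Lemma LtK t : tup (Lt t) = t.
Proof. by apply/ffunP => i; rewrite ffunE nth_Lt. Qed.

Lemma tupK s : size s = n -> Lt (tup s) = s.
Proof.
move=> Hs; apply: (@eq_from_nth _ 0); rewrite size_Lt ?Hs // => k Hk.
by rewrite (nth_Lt _ (Ordinal Hk)) ffunE.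
Qed.

Lemma upd_tup s (i : 'I_n) z : size s = n -> upd (tup s) i z = tup (set_nth 0 s i z).
Proof. by move=> Hs; apply/ffunP => j; rewrite !ffunE nth_set_nth. Qed.

Lemma set_nth_catr (p s : seq V) k X :
  set_nth 0 (p ++ s) (size p + k) X = p ++ set_nth 0 s k X.
Proof. by elim: p => //= a p ->. Qed.

Lemma nested_N (s s' : seq V) : (0 < size s)%N -> (0 < size s')%N ->
  nested_ip lact ip s s' = N 1 s s'.
Proof. by case: s => [|u s]; case: s' => [|v s'] //= _ _; rewrite lact1. Qed.

Lemma elemE (t t' : tp) : elem_ip lact ip t t' = N 1 (Lt t) (Lt t').
Proof. by rewrite /elem_ip nested_N ?size_Lt. Qed.

Lemma elem_tup s s' : size s = n -> size s' = n ->
  elem_ip lact ip (tup s) (tup s') = N 1 s s'.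
Proof. by move=> H H'; rewrite elemE !tupK. Qed.

Lemma coef_nil t : coef ([::] : fm) t = 0.
Proof. by rewrite /coef big_nil. Qed.
Lemma coef_cons (p : int * tp) (s : fm) t :
  coef (p :: s) t = (if p.2 == t then p.1 else 0) + coef s t.
Proof. by rewrite /coef big_cons; case: ifP; rewrite ?add0r. Qed.
Lemma coef_cat (s s' : fm) t : coef (s ++ s') t = coef s t + coef s' t.
Proof. by rewrite /coef big_cat. Qed.
Lemma coef_fscale c (s : fm) t : coef (fscale c s) t = c * coef s t.
Proof. by rewrite /coef /fscale big_map mulr_sumr. Qed.
Lemma coef_fneg (s : fm) t : coef (fneg s) t = - coef s t.
Proof. by rewrite /fneg coef_fscale mulN1r. Qed.
Lemma coef_flatten (I : Type) (r : seq I) (f : I -> fm) t :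
  coef (flatten (map f r)) t = \sum_(i <- r) coef (f i) t.
Proof.
elim: r => [|a r IH]; first by rewrite big_nil coef_nil.
by rewrite big_cons /= coef_cat IH.
Qed.

Local Notation tnull' := (@tnull R V lact ract n).
Definition eqv (x y : fm) := tnull' (x ++ fneg y).

Lemma tnull_coef (s s' : fm) : (forall t, coef s t = coef s' t) -> tnull' s -> tnull' s'.
Proof. by move=> E [rs [H1 H2]]; exists rs; split => // t; rewrite -E. Qed.

Lemma tnull_nil : tnull' [::].
Proof. by exists [::]; split => // t; rewrite coef_nil big_nil. Qed.

Lemma tnull0 (s : fm) : (forall t, coef s t = 0) -> tnull' s.
Proof. by move=> H; apply: (tnull_coef _ tnull_nil) => t; rewrite coef_nil H. Qed.

Lemma tnull_rel (r : fm) : is_relator lact ract r -> tnull' r.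
Proof.
move=> Hr; exists [:: (1, r)]; split.
  by move=> q; rewrite inE => /eqP ->.
by move=> t; rewrite big_cons big_nil addr0 mul1r.
Qed.

Lemma tnull_cat (s s' : fm) : tnull' s -> tnull' s' -> tnull' (s ++ s').
Proof.
move=> [rs [H1 H2]] [rs' [H1' H2']]; exists (rs ++ rs'); split.
  by move=> r; rewrite mem_cat => /orP [/H1|/H1'].
by move=> t; rewrite coef_cat big_cat H2 H2'.
Qed.

Lemma tnull_scale c (s : fm) : tnull' s -> tnull' (fscale c s).
Proof.
move=> [rs [H1 H2]]; exists [seq (c * r.1, r.2) | r <- rs]; split.
  by move=> r /mapP [r' Hr' ->]; exact: (H1 _ Hr').
move=> t; rewrite coef_fscale H2 big_map mulr_sumr; apply: eq_bigr => r _.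
by rewrite mulrA.
Qed.

Lemma tnull_flatten (I : eqType) (r : seq I) (f : I -> fm) :
  (forall i, i \in r -> tnull' (f i)) -> tnull' (flatten (map f r)).
Proof.
elim: r => [|a r IH] H /=; first exact: tnull_nil.
apply: tnull_cat; first by apply: H; rewrite mem_head.
by apply: IH => i Hi; apply: H; rewrite in_cons Hi orbT.
Qed.

Lemma eqv_coef (x y : fm) : (forall t, coef x t = coef y t) -> eqv x y.
Proof. by move=> H; apply: tnull0 => t; rewrite coef_cat coef_fneg H subrr. Qed.

Lemma eqv_refl x : eqv x x.
Proof. exact: eqv_coef. Qed.

Lemma eqv_sym x y : eqv x y -> eqv y x.
Proof.
move=> H; apply: (tnull_coef _ (tnull_scale (-1) H)) => t.
by rewrite coef_fscale !coef_cat !coef_fneg mulN1r opprD opprK addrC.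
Qed.

Lemma eqv_trans x y z : eqv x y -> eqv y z -> eqv x z.
Proof.
move=> H H'; apply: (tnull_coef _ (tnull_cat H H')) => t.
by rewrite !coef_cat !coef_fneg addrA subrK.
Qed.

Lemma eqv_cat x y x' y' : eqv x y -> eqv x' y' -> eqv (x ++ x') (y ++ y').
Proof.
move=> H H'; apply: (tnull_coef _ (tnull_cat H H')) => t.
rewrite !coef_cat !coef_fneg !coef_cat opprD.
by rewrite addrACA.
Qed.

Lemma eqv_scale c x y : eqv x y -> eqv (fscale c x) (fscale c y).
Proof.
move=> H; apply: (tnull_coef _ (tnull_scale c H)) => t.
by rewrite coef_cat coef_fneg !coef_fscale coef_cat coef_fneg mulrBr.
Qed.

Lemma eqv_nil x : eqv x [::] <-> tnull' x.
Proof. by rewrite /eqv /= cats0. Qed.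

Lemma tnull_eqv x y : eqv x y -> tnull' y -> tnull' x.
Proof.
move=> H Hy; apply: (tnull_coef _ (tnull_cat H Hy)) => t.
by rewrite !coef_cat coef_fneg subrK.
Qed.

Lemma eqv_flatten (I : eqType) (r : seq I) (f g : I -> fm) :
  (forall i, i \in r -> eqv (f i) (g i)) -> eqv (flatten (map f r)) (flatten (map g r)).
Proof.
elim: r => [|a r IH] H /=; first exact: eqv_refl.
apply: eqv_cat; first by apply: H; rewrite mem_head.
by apply: IH => i Hi; apply: H; rewrite in_cons Hi orbT.
Qed.

Lemma map_flatten1 (I : Type) (r : seq I) (f : I -> int * tp) :
  map f r = flatten (map (fun i => [:: f i]) r).
Proof. by elim: r => //= a r ->. Qed.

Lemma eqv_null x y : tnull' x -> tnull' y -> eqv x y.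
Proof. by move=> Hx Hy; apply: tnull_cat Hx (tnull_scale (-1) Hy). Qed.

Lemma rel_add (p rest : seq V) x y : (size p + (size rest).+1 = n)%N ->
  eqv [:: (1, tup (p ++ (x + y) :: rest))]
      [:: (1, tup (p ++ x :: rest)); (1, tup (p ++ y :: rest))].
Proof.
move=> Hs; have Hi : (size p < n)%N by rewrite -Hs addnS ltnS leq_addr.
set t := tup (p ++ 0 :: rest).
have Ut z : upd t (Ordinal Hi) z = tup (p ++ z :: rest).
  rewrite upd_tup ?size_cat //=.
  by have := set_nth_catr p (0 :: rest) 0 z; rewrite addn0 => ->.
apply: tnull_rel; left; exists t, (Ordinal Hi), x, y.
by rewrite /fneg /fscale /= !mulr1 !Ut.
Qed.

Lemma rel_bal (p rest : seq V) x y a : (size p + (size rest).+2 = n)%N ->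
  eqv [:: (1, tup (p ++ ract x a :: y :: rest))]
      [:: (1, tup (p ++ x :: lact a y :: rest))].
Proof.
move=> Hs; have Hi : (size p < n)%N by rewrite -Hs addnS ltnS leq_addr.
have Hj : ((size p).+1 < n)%N by rewrite -Hs !addnS !ltnS leq_addr.
set t := tup (p ++ 0 :: 0 :: rest).
have Ut X Y : upd (upd t (Ordinal Hi) X) (Ordinal Hj) Y = tup (p ++ X :: Y :: rest).
  rewrite upd_tup ?size_cat //=.
  have := set_nth_catr p (0 :: 0 :: rest) 0 X; rewrite addn0 /= => ->.
  rewrite upd_tup ?size_cat //=.
  by have := set_nth_catr p (X :: 0 :: rest) 1 Y; rewrite addn1 /= => ->.
apply: tnull_rel; right; exists t, (Ordinal Hi), (Ordinal Hj), x, y, a; split => //.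
by rewrite /fneg /fscale /= !mulr1 !Ut.
Qed.

Lemma rel_zero (p rest : seq V) : (size p + (size rest).+1 = n)%N ->
  tnull' [:: (1, tup (p ++ 0 :: rest))].
Proof.
move=> Hs; have := rel_add 0 0 Hs; rewrite addr0 => H.
apply: (tnull_coef _ (tnull_scale (-1) H)) => t.
rewrite coef_fscale coef_cat coef_fneg !coef_cons !coef_nil /=.
by case: (_ == t); rewrite ?addr0 ?subrr ?mulr0 //; rewrite mulN1r opprB addrK.
Qed.

Lemma rel_neg (p rest : seq V) v : (size p + (size rest).+1 = n)%N ->
  eqv [:: (-1, tup (p ++ v :: rest))] [:: (1, tup (p ++ (- v) :: rest))].
Proof.
move=> Hs; have := rel_add v (- v) Hs; rewrite subrr => H.
have H2 := tnull_eqv (eqv_sym H) (rel_zero Hs).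
apply: (tnull_coef _ (tnull_scale (-1) H2)) => t.
rewrite coef_fscale /= !coef_cons !coef_nil /= !addr0.
by rewrite mulrDr !mulN1r ?mulr1.
Qed.

Lemma split_sum (I : Type) (s : seq I) (a : I -> V) (p rest : seq V) :
  (size p + (size rest).+1 = n)%N ->
  eqv [:: (1, tup (p ++ (\sum_(i <- s) a i) :: rest))]
      [seq (1, tup (p ++ a i :: rest)) | i <- s].
Proof.
move=> Hs; elim: s => [|i s IH].
  by rewrite big_nil /=; apply/eqv_nil; exact: rel_zero.
rewrite big_cons /=; apply: (eqv_trans (rel_add _ _ Hs)).
by have := eqv_cat (eqv_refl [:: (1, tup (p ++ a i :: rest))]) IH.
Qed.

Lemma rel_int (c : int) u (rest : seq V) : ((size rest).+1 = n)%N ->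
  eqv [:: (c, tup (u :: rest))] [:: (1, tup ((u *~ c) :: rest))].
Proof.
move=> Hs; have Hs0 : (size ([::] : seq V) + (size rest).+1 = n)%N by rewrite add0n.
have Hnat k : eqv [:: (k%:Z, tup (u :: rest))] [:: (1, tup (u *~ k :: rest))].
  elim: k => [|k IH].
    apply: eqv_null; first by apply: tnull0 => t; rewrite coef_cons coef_nil; case: ifP.
    by rewrite mulr0z; exact: (rel_zero Hs0).
  apply: (@eqv_trans _ ([:: (k%:Z, tup (u :: rest))] ++ [:: (1, tup (u :: rest))])).
    apply: eqv_coef => t; rewrite coef_cat !coef_cons !coef_nil.
    by case: (_ == t); rewrite ?addr0 // intS addrC.
  apply: (eqv_trans (eqv_cat IH (eqv_refl _))) => /=.
  have -> : u *~ k.+1 = u *~ k + u by rewrite -!pmulrn mulrSr.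
  exact: (eqv_sym (rel_add _ _ Hs0)).
case: c => [k|k]; first exact: Hnat.
rewrite NegzE mulrNz.
apply: (@eqv_trans _ (fscale (-1) [:: ((k.+1)%:Z, tup (u :: rest))])).
  by apply: eqv_coef => t; rewrite coef_fscale !coef_cons !coef_nil; case: (_ == t);
    rewrite ?addr0 ?mulr0 // mulN1r.
apply: (eqv_trans (eqv_scale (-1) (Hnat k.+1))).
rewrite /fscale /= mulr1.
exact: (rel_neg _ Hs0).
Qed.

Local Notation elem := (@elem_ip R V lact n ip).

Lemma size_split (t : tp) (i : 'I_n) z :
  size (take i (Lt t) ++ z :: drop i.+1 (Lt t)) = n.
Proof.
rewrite size_cat /= size_take size_drop size_Lt ltn_ord.
by rewrite subnSK // subnKC // ltnW.
Qed.

Lemma upd_split t (i : 'I_n) z : upd t i z = tup (take i (Lt t) ++ z :: drop i.+1 (Lt t)).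
Proof. by rewrite -{1}(LtK t) upd_tup ?size_Lt // set_nthE size_Lt ltn_ord. Qed.

Lemma upd2_split t (i j : 'I_n) X Y : val j = (val i).+1 ->
  upd (upd t i X) j Y = tup (take i (Lt t) ++ X :: Y :: drop (val i).+2 (Lt t)).
Proof.
move=> Hj; rewrite [upd t i X]upd_split upd_tup ?size_split // Hj.
have Hi : (size (take i (Lt t)) = i)%N by rewrite size_take size_Lt ltn_ord.
have := set_nth_catr (take i (Lt t)) (X :: drop i.+1 (Lt t)) 1 Y.
rewrite Hi addn1 => ->; congr (tup (_ ++ _)) => /=.
have Hlt : ((val i).+1 < size (Lt t))%N by rewrite size_Lt -Hj ltn_ord.
by rewrite (drop_nth 0 Hlt).
Qed.

Lemma N_slot_add (P rest vs : seq V) x y : (size P < size vs)%N ->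
  N 1 (P ++ (x + y) :: rest) vs = N 1 (P ++ x :: rest) vs + N 1 (P ++ y :: rest) vs.
Proof.
move=> H; rewrite !Ncat; case E: (drop (size P) vs) => [|v vs'].
  by move/(congr1 size): E; rewrite size_drop /=; move/eqP; rewrite subn_eq0 leqNgt H.
by rewrite /= lactDr ipDl ND.
Qed.

Lemma N_slot_bal (P rest vs : seq V) x y a : ((size P).+1 < size vs)%N ->
  N 1 (P ++ ract x a :: y :: rest) vs = N 1 (P ++ x :: lact a y :: rest) vs.
Proof.
move=> H; rewrite !Ncat; case E: (drop (size P) vs) => [|v [|v' vs']].
- by move/(congr1 size): E; rewrite size_drop /=; move/eqP; rewrite subn_eq0 leqNgt ltnW.
- by move/(congr1 size): E; rewrite size_drop /= => /eqP; rewrite -(eqn_add2r (size P)) subnK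
     ?(ltnW (ltnW H)) // add1n eq_sym ltn_eqF.
by rewrite /= lractC iprl lactM.
Qed.

Lemma elem_add t t' (i : 'I_n) x y :
  elem (upd t i (x + y)) t' = elem (upd t i x) t' + elem (upd t i y) t'.
Proof.
rewrite !elemE !upd_split !tupK ?size_split // N_slot_add //.
by rewrite size_take size_Lt ltn_ord size_Lt.
Qed.

Lemma elem_bal t t' (i j : 'I_n) x y a : val j = (val i).+1 ->
  elem (upd (upd t i (ract x a)) j y) t' = elem (upd (upd t i x) j (lact a y)) t'.
Proof.
move=> Hj.
have Hlt : ((val i).+1 < n)%N by rewrite -Hj ltn_ord.
have Hsz X Y : size (take i (Lt t) ++ X :: Y :: drop (val i).+2 (Lt t)) = n.
  have Hlt2 : ((nat_of_ord i).+1 < n)%N := Hlt.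
  rewrite size_cat /= size_take size_drop size_Lt ltn_ord; lia.
rewrite !elemE !upd2_split // !tupK ?Hsz //.
by rewrite N_slot_bal // size_take size_Lt ltn_ord size_Lt.
Qed.

Lemma intr_sumz (I : Type) (s : seq I) (g : I -> int) :
  ((\sum_(i <- s) g i)%:~R : quat R) = \sum_(i <- s) (g i)%:~R.
Proof.
elim: s => [|a s IH]; first by rewrite !big_nil mulr0z.
by rewrite !big_cons intrD IH.
Qed.

Lemma sum_coef (F : tp -> quat R) (s : fm) (S : seq tp) : uniq S ->
  {subset map snd s <= S} ->
  \sum_(p <- s) p.1%:~R * F p.2 = \sum_(t <- S) (coef s t)%:~R * F t.
Proof.
move=> US; elim: s => [|p s IH] sub.
  by rewrite big_nil big1 // => t _; rewrite coef_nil mulr0z mul0r.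
rewrite big_cons IH; last by move=> t Ht; apply: sub; rewrite /= in_cons Ht orbT.
have Hp : p.2 \in S by apply: sub; rewrite /= mem_head.
under [RHS]eq_bigr => t _ do rewrite coef_cons intrD mulrDl.
rewrite big_split /=; congr (_ + _).
rewrite (bigD1_seq p.2) //= eqxx big1 ?addr0 // => t.
by rewrite eq_sym => /negbTE ->; rewrite mulr0z mul0r.
Qed.

Lemma null_sum (F : tp -> quat R) :
  (forall r, is_relator lact ract r -> \sum_(p <- r) p.1%:~R * F p.2 = 0) ->
  forall s, tnull' s -> \sum_(p <- s) p.1%:~R * F p.2 = 0.
Proof.
move=> HF s [rs [H1 H2]].
set S := undup (map snd s ++ flatten [seq map snd r.2 | r <- rs]).
have US : uniq S by apply: undup_uniq.
rewrite (sum_coef _ US); last by move=> t Ht; rewrite mem_undup mem_cat Ht.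
under eq_bigr => t _ do rewrite H2 intr_sumz mulr_suml.
rewrite exchange_big /= big1_seq // => r Hr.
have -> : \sum_(t <- S) (r.1 * coef r.2 t)%:~R * F t
    = r.1%:~R * \sum_(t <- S) (coef r.2 t)%:~R * F t.
  by rewrite mulr_sumr; apply: eq_bigr => t _; rewrite intrM mulrA.
rewrite -sum_coef //; first by rewrite HF ?mulr0 //; exact: H1.
move=> t Ht; rewrite mem_undup mem_cat; apply/orP; right.
by apply/flattenP; exists (map snd r.2) => //; apply/mapP; exists r.
Qed.

Local Notation T := (@tensor_ip R V lact n ip).
Definition Fy (y : fm) (t : tp) : quat R := \sum_(q <- y) q.1%:~R * elem t q.2.

Lemma T_F x y : T x y = \sum_(p <- x) p.1%:~R * Fy y p.2.
Proof.
rewrite /tensor_ip /Fy; apply: eq_bigr => p _; rewrite mulr_sumr.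
by apply: eq_bigr => q _; rewrite intrM mulrA.
Qed.

Lemma rel_vanish y r : is_relator lact ract r -> \sum_(p <- r) p.1%:~R * Fy y p.2 = 0.
Proof.
case=> [[t [i [x [x' ->]]]] | [t [i [j [x [x' [a [Hj ->]]]]]]]].
  have FA : Fy y (upd t i (x + x')) = Fy y (upd t i x) + Fy y (upd t i x').
    by rewrite /Fy -big_split; apply: eq_bigr => q _; rewrite elem_add mulrDr.
  rewrite !big_cons big_nil /= addr0 mulr1z mulrN1z FA mul1r !mulN1r -opprD.
  exact: subrr.
have FA : Fy y (upd (upd t i (ract x a)) j x') = Fy y (upd (upd t i x) j (lact a x')).
  by apply: eq_bigr => q _; rewrite elem_bal.
by rewrite !big_cons big_nil /= addr0 mulr1z mulrN1z FA mul1r mulN1r subrr.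
Qed.

Lemma T_null_l s y : tnull' s -> T s y = 0.
Proof. by move=> Hs; rewrite T_F; apply: null_sum => // r Hr; exact: rel_vanish. Qed.

Lemma T_catl x x' y : T (x ++ x') y = T x y + T x' y.
Proof. by rewrite /tensor_ip big_cat. Qed.

Lemma T_catr x y y' : T x (y ++ y') = T x y + T x y'.
Proof. by rewrite /tensor_ip -big_split; apply: eq_bigr => p _; rewrite big_cat. Qed.

Lemma T_fneg_l x y : T (fneg x) y = - T x y.
Proof.
rewrite /tensor_ip /fneg /fscale big_map -sumrN; apply: eq_bigr => p _.
rewrite -sumrN; apply: eq_bigr => q _.
by rewrite /= mulN1r mulNr intrN mulNr.
Qed.

Lemma elem_sym t t' : elem t' t = qconj (elem t t').
Proof. by rewrite !elemE -Nconj qconj1. Qed.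

Lemma T_sym x y : T y x = qconj (T x y).
Proof.
rewrite /tensor_ip qconj_sum exchange_big; apply: eq_bigr => p _.
rewrite qconj_sum; apply: eq_bigr => q _.
by rewrite qconjM qconj_int mulrzr mulrzl elem_sym mulrC.
Qed.

Lemma T_wd x x' y y' : eqv x x' -> eqv y y' -> T x y = T x' y'.
Proof.
move=> Hx Hy.
have E1 : T x y = T x' y.
  by apply/eqP; rewrite -subr_eq0 -T_fneg_l -T_catl T_null_l.
have E2 : T y x' = T y' x'.
  by apply/eqP; rewrite -subr_eq0 -T_fneg_l -T_catl T_null_l.
by rewrite E1 (T_sym y x') E2 -(T_sym y' x').
Qed.

Lemma Lt_last t : Lt t = take n' (Lt t) ++ [:: t ord_max].
Proof.
rewrite -{1}(cat_take_drop n' (Lt t)) (drop_nth 0) ?size_Lt //.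
rewrite drop_oversize ?size_Lt //.
by have := nth_Lt t ord_max; rewrite /= => ->.
Qed.

Lemma Lt_first t : Lt t = t ord0 :: drop 1 (Lt t).
Proof.
rewrite -{1}(drop0 (Lt t)) (drop_nth 0) ?size_Lt //.
by have := nth_Lt t ord0; rewrite /= => ->.
Qed.

Lemma N_last (P P' : seq V) u v a b : size P = size P' ->
  N 1 (P ++ [:: ract u a]) (P' ++ [:: ract v b]) = qconj b * N 1 (P ++ [:: u]) (P' ++ [:: v]) * a.
Proof.
move=> H; rewrite !Ncat !Ncatr ?H // !drop_size_cat //=.
by rewrite lractC ipS.
Qed.

Definition trf (t : tp) (a : quat R) : tp := upd t ord_max (ract (t ord_max) a).
Definition tlf (t : tp) (a : quat R) : tp := upd t ord0 (lact a (t ord0)).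

Lemma tractE x a : tract ract x a = [seq (p.1, trf p.2 a) | p <- x].
Proof.
apply: eq_map => p; congr (_, _); apply/ffunP => j; rewrite !ffunE.
have -> : (val j == n.-1) = (j == ord_max) by [].
by case: (eqVneq j ord_max) => [->|].
Qed.

Lemma tlactE l x : tlact lact l x = [seq (p.1, tlf p.2 l) | p <- x].
Proof.
apply: eq_map => p; congr (_, _); apply/ffunP => j; rewrite !ffunE.
have -> : (val j == 0%N) = (j == ord0) by [].
by case: (eqVneq j ord0) => [->|].
Qed.

Lemma elem_tr t t' a b : elem (trf t a) (trf t' b) = qconj b * elem t t' * a.
Proof.
rewrite /trf !elemE !upd_split !tupK ?size_split // /=.
rewrite (drop_oversize (n := n'.+1)) ?size_Lt // (drop_oversize (n := n'.+1)) ?size_Lt //.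
rewrite N_last ?size_take ?size_Lt ?ltnSn //.
by rewrite -!Lt_last.
Qed.

Lemma elem_tl t t' l : elem t (tlf t' l) = elem (tlf t (qconj l)) t'.
Proof.
rewrite /tlf !elemE !upd_split !tupK ?size_split // /= take0 /=.
rewrite [Lt t]Lt_first [Lt t']Lt_first /=.
by rewrite !drop0 !lact1 ipL.
Qed.

Lemma T_tract x y a b : T (tract ract x a) (tract ract y b) = qconj b * T x y * a.
Proof.
rewrite !tractE /tensor_ip big_map mulr_sumr mulr_suml; apply: eq_bigr => p _.
rewrite big_map mulr_sumr mulr_suml; apply: eq_bigr => q _.
by rewrite /= elem_tr !mulrzl mulrzAr mulrzAl.
Qed.

Lemma T_tlact x y l : T x (tlact lact l y) = T (tlact lact (qconj l) x) y.
Proof.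
rewrite !tlactE /tensor_ip big_map; apply: eq_bigr => p _.
by rewrite big_map; apply: eq_bigr => q _; rewrite /= elem_tl.
Qed.

Definition famx (x : fm) : seq (seq V) := [seq lfirst (p.1%:~R) (Lt p.2) | p <- x].

Lemma T_Sf x : T x x = Sf (famx x).
Proof.
rewrite /Sf /tensor_ip /famx big_map; apply: eq_bigr => p _.
rewrite big_map; apply: eq_bigr => q _.
rewrite -N_lfirst ?size_Lt // qconj_int -intrM Nz -mulrzl elemE.
by rewrite mulr1 mulrzl [p.1 * q.1]mulrC.
Qed.

Lemma famx_size x : all (fun w => size w == n'.+1) (famx x).
Proof. by apply/allP => w /mapP [p _ ->]; rewrite size_lfirst size_Lt. Qed.

Lemma T_pos x : qnonneg (T x x).
Proof. rewrite T_Sf; exact: (Sf_nonneg (famx_size x)). Qed.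

Lemma coef_map (I : Type) (r : seq I) (f : I -> int * tp) t :
  coef (map f r) t = \sum_(i <- r) coef [:: f i] t.
Proof. by rewrite map_flatten1 coef_flatten. Qed.

Lemma eqv_map (I : eqType) (r : seq I) (f g : I -> int * tp) :
  (forall i, i \in r -> eqv [:: f i] [:: g i]) -> eqv (map f r) (map g r).
Proof. by move=> H; rewrite !map_flatten1; apply: eqv_flatten. Qed.

Lemma D_ind m : forall (P : seq V) (fam : seq (seq V)), (size P + m.+1 = n)%N ->
  all (fun w => size w == m.+1) fam -> Sf fam = 0 ->
  tnull' [seq (1, tup (P ++ w)) | w <- fam].
Proof.
elim: m => [|m IH] P fam HP Hs HS.
  rewrite Sf_base // in HS.
  have Z0 : \sum_(w <- fam) head 0 w = 0 by case: (ipP (\sum_(w <- fam) head 0 w)) => _ /(_ HS).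
  have E : [seq ((1 : int), tup (P ++ w)) | w <- fam] = [seq ((1 : int), tup (P ++ head 0 w :: [::])) | w <- fam].
    apply/eq_in_map => w Hw; move: (eqP (allP Hs w Hw)).
    by case: w {Hw} => [|a [|? ?]].
  have Hsp := @split_sum _ fam (fun w => head 0 w) P [::] HP.
  rewrite Z0 in Hsp; rewrite E.
  exact: (tnull_eqv (eqv_sym Hsp) (@rel_zero P [::] HP)).
have [E [_ HE]] := GS (map (head 0) fam).
rewrite (Sf_step Hs HE) in HS.
set I := index_enum 'I_(size E).
set B := fun (i : 'I_(size E)) (w : seq V) => ip (head 0 w) (nth 0 E i).
set g := fun (i : 'I_(size E)) (w : seq V) =>
  (1 : int, tup ((P ++ [:: nth 0 E i]) ++ lfirst (B i w) (behead w))).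
have Hsz i : all (fun w => size w == m.+1)
    [seq lfirst (ip (head 0 w) (nth 0 E i)) (behead w) | w <- fam].
  apply/allP => w' /mapP [w Hw ->]; rewrite size_lfirst size_behead.
  by rewrite (eqP (allP Hs w Hw)).
have Hnull : tnull' (flatten [seq [seq g i w | w <- fam] | i <- I]).
  apply: tnull_flatten => i Hi.
  have := IH (P ++ [:: nth 0 E i]) _ _ (Hsz i).
  rewrite -map_comp; apply.
    by rewrite size_cat /= addn1 addSnnS.
  apply: (qnonneg_sum_eq0 _ HS Hi) => j.
  by apply: (Sf_nonneg (Hsz j)).
apply: (tnull_eqv _ Hnull).
apply: (@eqv_trans _ (flatten [seq [seq g i w | i <- I] | w <- fam])).
  rewrite map_flatten1; apply: eqv_flatten => w Hw.
  have sw := eqP (allP Hs w Hw).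
  move: (HE (head 0 w) (map_f _ Hw)) => Hu.
  have Hw' : w = head 0 w :: head 0 (behead w) :: behead (behead w).
    by move: sw; case: w {Hw Hu} => [|a [|b r]].
  have Hsr : (size P + (size (behead (behead w))).+2 = n)%N.
    by rewrite !size_behead sw -HP.
  rewrite {1}Hw' {1}Hu.
  have Hs1 : (size P + (size (head (0%R : V) (behead w) :: behead (behead w))).+1 = n)%N.
    by rewrite -Hsr.
  apply: (eqv_trans (split_sum _ _ Hs1)).
  apply: eqv_map => i _.
  have Hb : behead w = head 0 (behead w) :: behead (behead w) by rewrite {1}Hw'.
  rewrite /g /B [X in lfirst _ X]Hb /= -catA /=.
  exact: (rel_bal _ _ _ Hsr).
apply: eqv_coef => t.
rewrite !coef_flatten.
under eq_bigr => w _ do rewrite coef_map.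
under [RHS]eq_bigr => i _ do rewrite coef_map.
by rewrite exchange_big.
Qed.

Lemma T_def x : T x x = 0 -> tnull' x.
Proof.
move=> H0; rewrite T_Sf in H0.
have := D_ind (P := [::]) (erefl _) (famx_size x) H0.
apply: tnull_eqv.
rewrite /famx -map_comp -{1}(map_id x); apply: eqv_map => p _.
case: p => c t /=.
rewrite -{1}(LtK t) [Lt t]Lt_first /= lactz.
by apply: rel_int; rewrite size_drop size_Lt subn1.
Qed.
End Hilb.

Theorem proposition4p2 (R : realType) (V : zmodType)
    (lact : quat R -> V -> V) (ract : V -> quat R -> V) (ip : V -> V -> quat R) :
  two_sided_qhilbert lact ract ip ->
  (forall (u v : V) (l : quat R), ip u (lact l v) = ip (lact (qconj l) u) v) ->
  forall n : nat, (0 < n)%N ->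
  let T := @tensor_ip R V lact n ip in
  (* the formula gives a well-defined map on H^{(x)n} x H^{(x)n} *)
  (forall x x' y y' : formal V n, tequiv lact ract x x' -> tequiv lact ract y y' ->
     T x y = T x' y') /\
  (* which is a quaternionic inner product on H^{(x)n} *)
  (forall x x' y : formal V n, T (tadd x x') y = T x y + T x' y) /\
  (forall x y y' : formal V n, T x (tadd y y') = T x y + T x y') /\
  (forall (x y : formal V n) (a b : quat R),
     T (tract ract x a) (tract ract y b) = qconj b * T x y * a) /\
  (forall x y : formal V n, T y x = qconj (T x y)) /\
  (forall x : formal V n, qnonneg (T x x)) /\
  (forall x : formal V n, T x x = 0 -> tequiv lact ract x [::]) /\
  (* and satisfies <x, l y> = <conj(l) x, y> *)
  (forall (x y : formal V n) (l : quat R), T x (tlact lact l y) = T (tlact lact (qconj l) x) y).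
Proof.
move=> [[[lDr lDl lM l1] [rDl rDr rM r1] lrC] [iDl iDr iS iC iP] _] hL [//|n'] _ T.
rewrite {}/T.
split; first by move=> x x' y y' Hx Hy; apply: T_wd.
split; first by move=> x x' y; apply: T_catl.
split; first by move=> x y y'; apply: T_catr.
split; first by move=> x y a b; apply: T_tract.
split; first by move=> x y; apply: T_sym.
split; first by move=> x; apply: T_pos.
split; last by move=> x y l; apply: T_tlact.
move=> x H; rewrite /tequiv /= cats0.
by apply: T_def.
Qed.
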